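(* Let $d\ge2$ and $y\in Y_d$. If the set $A_{d+1}^+\tau_y\subset X_{d+1}$ is unbounded (i.e. has noncompact closure), then $y$ is L.
   Context: $X_k$ is the space of unimodular lattices in $\mathbb{R}^k$ ($\cong SL_k(\mathbb{R})/SL_k(\mathbb{Z})$) with the quotient topology. $Y_d$ is the space of grids $x+v$ ($x\in X_d$, $v\in\mathbb{R}^d$). For a grid $y=x+v$, $\tau_y\in X_{d+1}$ is the lattice $\{(u+nv,n)^t:u\in x,\ n\in\mathbb{Z}\}$ (equivalently $\begin{pmatrix}g&v\\0&1\end{pmatrix}SL_{d+1}(\mathbb{Z})$ where $x$ is spanned by the columns of $g$). $A_{d+1}^+=\{\mathrm{diag}(e^{t_1},\dots,e^{t_{d+1}}): \sum t_i=0,\ t_i>0\text{ for }i=1,\dots,d\}$. For $w\in\mathbb{R}^d$, $N(w)=\prod_iw_i$; $N(y)=\inf\{|N(w)|:w\in y\}$; $n(x+v)=x+nv$. A grid $y$ is L if $\inf_{n\ne0}|nN(ny)|=0$. *)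

(* Defs.v *)
From HB Require Import structures.
From mathcomp Require Import all_boot all_order all_algebra.
From mathcomp Require Import all_classical all_reals all_analysis.
Set Implicit Arguments. Unset Strict Implicit. Unset Printing Implicit Defensive.
Import Order.TTheory GRing.Theory Num.Theory.
Import numFieldNormedType.Exports.
Local Open Scope classical_set_scope.
Local Open Scope ring_scope.

(* A unimodular lattice in R^k is represented by g : 'M_k with \det g = 1;
   it is the lattice spanned by the columns of g, i.e. the coset g SL_k(Z). *)

Definition same_lattice (R : realType) (k : nat) (g h : 'M[R]_k) : Prop :=
  exists gam : 'M[int]_k, \det gam = 1 /\ h = g *m map_mx intr gam.

(* A set S of lattices (given by representatives) is bounded in X_k, i.e.
   has compact closure, iff it lies in the image pi(K) of a compact subset
   K of SL_k(R) under the quotient map pi. *)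
Definition bounded_in_X (R : realType) (k : nat) (S : set 'M[R]_k) : Prop :=
  exists K : set 'M[R]_k, compact K /\ K `<=` [set h | \det h = 1] /\
    forall g, S g -> exists2 h, K h & same_lattice g h.

(* tau_y for the grid y = x + v, x spanned by the columns of g *)
Definition tau (R : realType) (d : nat) (g : 'M[R]_d) (v : 'cV[R]_d)
  : 'M[R]_(d + 1) := block_mx g v 0 1%:M.

Definition Aplus (R : realType) (d : nat) : set 'M[R]_(d + 1) :=
  [set a | exists t : 'rV[R]_(d + 1),
     \sum_i t 0 i = 0 /\ (forall i : 'I_(d + 1), (i < d)%N -> 0 < t 0 i) /\
     a = diag_mx (map_mx (@expR R) t)].

Definition Aplus_orbit (R : realType) (d : nat) (g : 'M[R]_d) (v : 'cV[R]_d)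
  : set 'M[R]_(d + 1) := [set a *m tau g v | a in @Aplus R d].

Definition Nw (R : realType) (d : nat) (w : 'cV[R]_d) : R := \prod_i w i 0.

Definition grid (R : realType) (d : nat) (g : 'M[R]_d) (v : 'cV[R]_d)
  : set 'cV[R]_d := [set g *m map_mx intr u + v | u in [set: 'cV[int]_d]].

Definition Ngrid (R : realType) (d : nat) (g : 'M[R]_d) (v : 'cV[R]_d) : R :=
  inf [set `|Nw w| | w in grid g v].

Definition is_L (R : realType) (d : nat) (g : 'M[R]_d) (v : 'cV[R]_d) : Prop :=
  inf [set `|(n%:~R : R) * Ngrid g (n%:~R *: v)| | n in [set n : int | n != 0]] = 0.

(* Main.v *)
Require Import Defs.
From HB Require Import structures.
From mathcomp Require Import all_boot all_order all_algebra.
From mathcomp Require Import all_classical all_reals all_analysis.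
Import Order.TTheory GRing.Theory Num.Theory.
Import numFieldNormedType.Exports.
Local Open Scope classical_set_scope.
Local Open Scope ring_scope.
From mathcomp Require Import perm.
Section Topo.
Variable R : realType.

Lemma mx_cont_entries (T : topologicalType) m n (f : T -> 'M[R]_(m, n)) :
  (forall i j, continuous (fun x => f x i j)) -> continuous f.
Proof.
move=> hf x A [P Pn sPA].
have h : \forall y \near x, forall ij : 'I_m * 'I_n, P ij.1 ij.2 (f y ij.1 ij.2).
  apply: filter_forall => -[i j] /=; exact: (hf i j x _ (Pn i j)).
apply: filterS h => y hy; apply: sPA => i j; exact: (hy (i, j)).
Qed.

Lemma cont_sum_seq (T : topologicalType) (I : Type) (r : seq I) (F : I -> T -> R) :
  (forall i, continuous (F i)) -> continuous (fun x => \sum_(i <- r) F i x).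
Proof.
move=> hF; elim: r => [|a r IH].
  have -> : (fun x => \sum_(i <- [::]) F i x) = (fun=> 0) by apply/funext => x; rewrite big_nil.
  exact: cst_continuous.
have -> : (fun x => \sum_(i <- a :: r) F i x) = (F a + (fun x => \sum_(i <- r) F i x))
  by apply/funext => x; rewrite big_cons.
by move=> x; apply: continuousD; [exact: hF | exact: IH].
Qed.

Lemma cont_prod_seq (T : topologicalType) (I : Type) (r : seq I) (F : I -> T -> R) :
  (forall i, continuous (F i)) -> continuous (fun x => \prod_(i <- r) F i x).
Proof.
move=> hF; elim: r => [|a r IH].
  have -> : (fun x => \prod_(i <- [::]) F i x) = (fun=> 1) by apply/funext => x; rewrite big_nil.
  exact: cst_continuous.
have -> : (fun x => \prod_(i <- a :: r) F i x) = (F a \* (fun x => \prod_(i <- r) F i x))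
  by apply/funext => x; rewrite big_cons.
by move=> x; apply: continuousM; [exact: hF | exact: IH].
Qed.

Lemma cont_mul (T : topologicalType) (f h : T -> R) :
  continuous f -> continuous h -> continuous (fun x => f x * h x).
Proof. by move=> hf hh x; apply: continuousM; [exact: hf | exact: hh]. Qed.

Lemma cont_cst (T : topologicalType) (c : R) : continuous (fun _ : T => c).
Proof. by move=> x; exact: cvg_cst. Qed.

Lemma det_continuous n : continuous (fun A : 'M[R]_n => \det A).
Proof.
rewrite /determinant.
apply: cont_sum_seq => s.
apply: cont_mul; first exact: cont_cst.
by apply: cont_prod_seq => i y; exact: coord_continuous.
Qed.

Lemma closed_det1 n : closed [set A : 'M[R]_n | \det A = 1].
Proof.
have -> : [set A : 'M[R]_n | \det A = 1] = (fun A : 'M[R]_n => \det A) @^-1` [set x | x = 1] by [].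
apply: preimage_closed; last exact: closed_eq.
move=> A _; exact: det_continuous.
Qed.

Lemma compact_box n (B : R) :
  compact [set A : 'M[R]_n | \det A = 1 /\ forall i j, `|A i j| <= B].
Proof.
set box := [set v : 'rV[R]_(n * n) | forall k, (fun=> `[- B, B]%classic) k (v ord0 k)].
have cb : compact box by apply: rV_compact => k; exact: segment_compact.
have cv : compact (vec_mx @` box).
  apply: continuous_compact => //; apply: continuous_subspaceT.
  apply: mx_cont_entries => i j; rewrite /=.
  have -> : (fun x : 'rV[R]_(n * n) => vec_mx x i j) = (fun x => x 0 (mxvec_index i j)).
    by apply/funext => x; rewrite mxE.
  exact: coord_continuous.
have -> : [set A : 'M[R]_n | \det A = 1 /\ forall i j, `|A i j| <= B] =
   (vec_mx @` box) `&` [set A | \det A = 1].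
  apply/seteqP; split => A /=.
    move=> [dA hA]; split => //; exists (mxvec A); last exact: mxvecK.
    move=> k; case/mxvec_indexP: k => i j; rewrite mxvecE /= in_itv /=.
    by rewrite -ler_norml.
  move=> [[v hv <-] dA]; split => // i j; rewrite mxE.
  by have := hv (mxvec_index i j); rewrite /= in_itv /= -ler_norml.
by apply: compact_closedI => //; exact: closed_det1.
Qed.
End Topo.
From mathcomp Require Import ring lra zify.
Section Alg.
Variable R : realType.

Definition Q {n} (G : 'M[R]_n) (x : 'cV[R]_n) : R := (x^T *m G *m x) 0 0.

Lemma mx11_mulE (A B : 'M[R]_1) : (A *m B) 0 0 = A 0 0 * B 0 0.
Proof. by rewrite [A]mx11_scalar [B]mx11_scalar -scalar_mxM !mxE !mulr1n. Qed.

Lemma scal00 (c : R) : (c%:M : 'M[R]_1) 0 0 = c.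
Proof. by rewrite mxE mulr1n. Qed.

Section Blk.
Variables (k : nat) (a : R) (b : 'M[R]_(1, k)) (H : 'M[R]_k).
Definition Gb := block_mx (a%:M : 'M[R]_1) b b^T H.
Definition Sb := H - a^-1 *: (b^T *m b).

Lemma Gb_factor : a != 0 ->
  Gb = block_mx 1%:M 0 (a^-1 *: b^T) 1%:M *m block_mx (a%:M : 'M[R]_1) b 0 Sb.
Proof.
move=> a0; rewrite mulmx_block !mul1mx !mul0mx !addr0 ?add0r ?mulmx1.
rewrite mul_mx_scalar scalerA mulfV // scale1r /Sb -scalemxAl addrC subrK.
done.
Qed.

Lemma Gb_det : a != 0 -> \det Gb = a * \det Sb.
Proof.
move=> a0; rewrite Gb_factor // det_mulmx det_lblock det_ublock !det1 mul1r.
by rewrite mul1r det_scalar expr1.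
Qed.

Lemma Gb_Q (al : R) (z : 'cV[R]_k) : a != 0 ->
  Q Gb (col_mx (al%:M : 'M[R]_1) z) = a * (al + a^-1 * (b *m z) 0 0) ^+ 2 + Q Sb z.
Proof.
move=> a0; rewrite /Q /Gb /Sb tr_col_mx tr_scalar_mx mul_row_block mul_row_col.
set be := (b *m z) 0 0.
have hb : b *m z = be%:M by rewrite [LHS]mx11_scalar.
have hbt : z^T *m b^T = be%:M by rewrite -trmx_mul hb tr_scalar_mx.
rewrite !mulmxDl hbt -!mulmxA hb.
rewrite mulmxBl mulmxBr -scalemxAl -scalemxAr.
rewrite -(mulmxA b^T) hb (mulmxA z^T b^T) hbt -!scalar_mxM.
rewrite !mxE /= ?mulr1n.
by field.
Qed.

Lemma Sb_sym : H^T = H -> Sb^T = Sb.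
Proof.
by move=> hH; rewrite /Sb linearB /= linearZ /= trmx_mul trmxK hH.
Qed.
End Blk.
End Alg.
Arguments Q {R n}.
Arguments Gb {R k}.
Arguments Sb {R k}.
Section Red.
Variable R : realType.
Local Notation iR := (map_mx (intr : int -> R)).

Lemma Q_diag n m (G : 'M[R]_n) (A : 'M[R]_(n, m)) i :
  (A^T *m G *m A) i i = Q G (col i A).
Proof.
rewrite /Q colE trmx_mul trmx_delta -!mulmxA (mulmxA A^T) (mulmxA _ G) -rowE -colE.
rewrite !mxE; apply: eq_bigr => l _; by rewrite !mxE.
Qed.

Lemma Q_mul n m (G : 'M[R]_n) (A : 'M[R]_(n, m)) x :
  Q G (A *m x) = Q (A^T *m G *m A) x.
Proof. by rewrite /Q trmx_mul !mulmxA. Qed.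

Lemma Q_scale n (G : 'M[R]_n) c x : Q G (c *: x) = c ^+ 2 * Q G x.
Proof. by rewrite /Q !linearZ /= -!scalemxAl !mxE mulrA expr2. Qed.

Lemma near_min k (G : 'M[R]_k.+1) eps : 0 < eps ->
  (forall z : 'cV[int]_k.+1, z != 0 -> eps <= Q G (iR z)) ->
  exists2 z1 : 'cV[int]_k.+1, z1 != 0 &
    forall z, z != 0 -> 5 * Q G (iR z1) <= 6 * Q G (iR z).
Proof.
move=> e0 hG.
set E := [set Q G (iR z) | z in [set z : 'cV[int]_k.+1 | z != 0]].
have z0 : (const_mx 1 : 'cV[int]_k.+1) != 0.
  apply/eqP => /matrixP /(_ 0 0); rewrite !mxE => /eqP; by rewrite oner_eq0.
have nE : E !=set0 by exists (Q G (iR (const_mx 1))); exists (const_mx 1).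
have lE : lbound E eps by move=> _ [z hz <-]; exact: hG.
have hinf : eps <= inf E by apply: lb_le_inf.
have hE : has_inf E by split => //; exists eps.
have [_ [z1 hz1 <-] h1] := inf_adherent (divr_gt0 (lt_le_trans e0 hinf) (ltr0n R 5)) hE.
exists z1 => // z hz.
have : inf E <= Q G (iR z) by apply: ge_inf; [exists eps | exists z].
lra.
Qed.

Lemma extend k (G : 'M[R]_k.+1) (z1 : 'cV[int]_k.+1) : z1 != 0 ->
  (forall z, z != 0 -> 0 < Q G (iR z)) ->
  (forall z, z != 0 -> 5 * Q G (iR z1) <= 6 * Q G (iR z)) ->
  exists gam : 'M[int]_k.+1, gam \in unitmx /\ col 0 gam = z1.
Proof.
move=> nz1 hpos hmin.
have [L uL [Rm uR [d _ dz]]] := int_Smith_normal_form z1.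
set c := d`_0 * Rm 0 0.
have hz : z1 = c *: col 0 L.
  rewrite dz; apply/matrixP => i j; rewrite (ord1 j) !mxE big_ord1 !mxE.
  rewrite big_ord_recl !mxE /= mulr1n big1 ?addr0; first by rewrite /c -mulrA mulrC.
  by move=> l _; rewrite !mxE /= mulr0n mulr0.
have c0 : c != 0 by apply: contraNneq nz1 => c0; rewrite hz c0 scale0r.
have w0 : col 0 L != 0 by apply: contraNneq nz1 => w0; rewrite hz w0 scaler0.
have h := hmin _ w0; have hp := hpos _ w0.
rewrite hz map_mxZ /= Q_scale in h.
have hc : c * c = 1.
  have : c * c <= 1.
    rewrite leNgt; apply/negP => hlt.
    have : ((2:int)%:~R : R) <= (c * c)%:~R by rewrite ler_int; lia.
    rewrite intrM -expr2 pmulrn => h2.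
    set q := Q G _ in h hp.
    have : 10 * q <= 6 * q.
      apply: le_trans h; move: h2; set C2 := _ ^+ 2; nra.
    lra.
  move: c0; lia.
exists (c *: L); split; last by rewrite hz; apply/matrixP => i j; rewrite !mxE.
rewrite unitmxE detZ unitrM unitrX ?(unitmxE _ L) //.
by apply/unitrP; exists c.
Qed.
End Red.
Arguments near_min {R k}. Arguments extend {R k}.
Section Red2.
Variable R : realType.
Local Notation iR := (map_mx (intr : int -> R)).

Lemma round_ex (t : R) : exists m : int, (t - m%:~R) ^+ 2 <= 1/4.
Proof.
exists (Num.floor (t + 1/2)).
have h1 := floor_le (t + 1/2).
have h2 : t + 1/2 < (Num.floor (t + 1/2) + 1)%:~R by rewrite -floor_lt_int ltrDl.
rewrite intrD in h2; move: h1 h2; set f := _%:~R => h1 h2.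
have : -(1/2) <= t - f <= 1/2 by apply/andP; split; lra.
move=> /andP [h3 h4]; nra.
Qed.

Lemma det00 n (A : 'M[R]_n) : n = 0%N -> \det A = 1.
Proof. by case: n A => // A _; exact: det_mx00. Qed.

Lemma unit_col_neq0 n (gam : 'M[int]_n) j : gam \in unitmx -> col j gam != 0.
Proof.
move=> ug; apply/eqP => hc.
have : gam *m (delta_mx j 0 : 'cV[int]_n) = 0 by move: hc; rewrite colE.
move=> /(congr1 (mulmx (invmx gam))); rewrite mulKmx // mulmx0 => /matrixP /(_ j 0).
by rewrite !mxE !eqxx /= => /eqP; rewrite oner_eq0.
Qed.

Lemma unit_mul_neq0 n (gam : 'M[int]_n) (x : 'cV[int]_n) : gam \in unitmx -> x != 0 -> gam *m x != 0.
Proof.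
move=> ug; apply: contraNneq => hx.
by rewrite -(mulKmx ug x) hx mulmx0.
Qed.

Lemma int_unit_sq (x : int) : x \is a GRing.unit -> x * x = 1.
Proof. by move=> /orP [/eqP -> | /eqP ->]. Qed.

Lemma det_unit_sq n (gam : 'M[int]_n) : gam \in unitmx -> (\det (iR gam)) ^+ 2 = 1.
Proof.
rewrite unitmxE det_map_mx => /int_unit_sq h.
by rewrite expr2 -rmorphM /= h rmorph1.
Qed.
End Red2.
Arguments unit_mul_neq0 {n gam x}.
Arguments unit_col_neq0 {n gam} j.
Arguments det00 {R n}.
Arguments det_unit_sq {R n gam}.
Arguments Q_diag {R n m}.
Arguments Q_mul {R n m}.
Arguments Q_scale {R n}.
Section Red3.
Variable R : realType.
Local Notation iR := (map_mx (intr : int -> R)).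

Lemma round_le (t : R) : (t - (Num.floor (t + 1/2))%:~R) ^+ 2 <= 1/4.
Proof.
have h1 := floor_le (t + 1/2).
have h2 : t + 1/2 < (Num.floor (t + 1/2) + 1)%:~R by rewrite -floor_lt_int ltrDl.
rewrite intrD in h2; move: h1 h2; set f := _%:~R => h1 h2.
have : -(1/2) <= t - f <= 1/2 by apply/andP; split; lra.
move=> /andP [h3 h4]; nra.
Qed.

Definition redP k (eps V C : R) :=
  forall G : 'M[R]_k, G^T = G ->
   (forall z : 'cV[int]_k, z != 0 -> eps <= Q G (iR z)) -> \det G <= V ->
   exists gam : 'M[int]_k, gam \in unitmx /\
     forall i, ((iR gam)^T *m G *m iR gam) i i <= C.

Lemma reduce k : forall eps V : R, 0 < eps -> exists C, 0 <= C /\ redP k eps V C.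
Proof.
elim: k => [|k IH] eps V e0.
  exists 0; split => // G _ _ _; exists 1%:M; split; [exact: unitmx1 | by case].
pose Vp := Num.max V 0.
have Vp0 : 0 <= Vp by rewrite le_max lexx orbT.
have VVp : V <= Vp by rewrite le_max lexx.
have e1 : 0 < 7/12 * eps by apply: mulr_gt0 => //; lra.
have [C2 [C2p hC2]] := IH (7/12 * eps) (Vp / eps) e1.
exists (Vp + 3 * C2); split; first lra.
move=> G hsym hG hV.
have hpos : forall z : 'cV[int]_k.+1, z != 0 -> 0 < Q G (iR z).
  by move=> z hz; exact: lt_le_trans e0 (hG z hz).
have [z1 nz1 hmin] := near_min G eps e0 hG.
have [g1 [ug1 cg1]] := extend G z1 nz1 hpos hmin.
pose a := Q G (iR z1).
have ae : eps <= a := hG z1 nz1.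
have a0 : a != 0 by apply/eqP => ha; move: ae; rewrite ha; lra.
pose G1 : 'M[R]_(1 + k) := (iR g1)^T *m G *m iR g1.
have hG1s : G1^T = G1 by rewrite /G1 !trmx_mul trmxK hsym mulmxA.
have hG1Q : forall x : 'cV[int]_(1 + k), Q G1 (iR x) = Q G (iR (g1 *m x)).
  by move=> x; rewrite map_mxM Q_mul.
have l0 : lshift k (0 : 'I_1) = 0 :> 'I_(1 + k) by apply/val_inj.
have hG100 : G1 (lshift k 0) (lshift k 0) = a.
  by rewrite l0 /G1 Q_diag -map_col cg1.
pose b := ursubmx G1.
pose H := drsubmx G1.
have hG1 : G1 = Gb a b H.
  have e1' : ulsubmx G1 = a%:M.
    apply/matrixP => i j; rewrite (ord1 i) (ord1 j) mxE mxE scal00; exact: hG100.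
  have e2 : dlsubmx G1 = b^T by rewrite /b trmx_ursub hG1s.
  by rewrite /Gb -e1' -e2 /b /H submxK.
have hH : H^T = H by rewrite /H trmx_drsub hG1s.
pose S := Sb a b H.
have hSs : S^T = S by apply: Sb_sym.
have hQ : forall (al : R) z, Q G1 (col_mx (al%:M : 'M[R]_1) z) =
    a * (al + a^-1 * (b *m z) 0 0) ^+ 2 + Q S z.
  by move=> al z; rewrite hG1 Gb_Q.
have a_pos : 0 < a by lra.
have hS : forall z : 'cV[int]_k, z != 0 -> 7/12 * eps <= Q S (iR z).
  move=> z nz.
  pose t := - (a^-1 * (b *m iR z) 0 0).
  pose m0 := Num.floor (t + 1/2).
  have hm0 := round_le t.
  pose x : 'cV[int]_(1 + k) := col_mx (m0%:M) z.
  have nx : x != 0.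
    apply: contraNneq nz => hx.
    by move: hx; rewrite /x -col_mx0 => /eq_col_mx [_ ->].
  have := hmin _ (unit_mul_neq0 ug1 nx).
  rewrite -hG1Q /x map_col_mx map_scalar_mx /= hQ -/m0.
  move: hm0; rewrite -/m0 /t; set u := a^-1 * _; set mm := (m0%:~R : R).
  set q := Q S _ => hm0 hh.
  have e : (mm + u) ^+ 2 = (- u - mm) ^+ 2 by rewrite -sqrrN opprD addrC.
  have := ler_wpM2l (ltW a_pos) hm0; rewrite -e => h4.
  rewrite -/a in hh; lra.
have hdetG1 : \det G1 = \det G.
  rewrite /G1 !det_mulmx det_tr mulrC mulrA -expr2 (det_unit_sq ug1) mul1r.
  done.
have hdetS : \det G = a * \det S by rewrite -hdetG1 hG1 Gb_det.
have hSV : \det S <= Vp / eps.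
  rewrite ler_pdivlMr //.
  have : a * \det S <= Vp by rewrite -hdetS; lra.
  move: (\det S) => ds h.
  case: (lerP ds 0) => hd; first nra.
  nra.
have [g2 [ug2 hg2]] := hC2 S hSs hS hSV.
pose f : 'rV[R]_k := a^-1 *: (b *m iR g2).
pose m : 'rV[int]_k := \row_j Num.floor (f 0 j + 1/2).
pose P : 'M[int]_(1 + k) := block_mx 1%:M (- m) 0 g2.
pose gam : 'M[int]_(1 + k) := g1 *m P.
have ugam : gam \in unitmx.
  rewrite unitmx_mul ug1 /= unitmxE det_ublock det1 mul1r -unitmxE.
  exact: ug2.
have hdiag : forall i, ((iR gam)^T *m G *m iR gam) i i = Q G1 (col i (iR P)).
  move=> i; rewrite -Q_diag; congr (_ _ i i).
  by rewrite /gam /G1 map_mxM !trmx_mul !mulmxA.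
have hcolL : col (lshift k 0) (iR P) = col_mx (1%:M : 'M[R]_1) 0.
  apply/matrixP => r c; rewrite (ord1 c) -(@fintype.splitK 1 k r); case: (fintype.split r) => r' /=.
    by rewrite (ord1 r') col_mxEu [LHS]mxE [LHS]mxE block_mxEul !mxE.
  by rewrite col_mxEd [LHS]mxE [LHS]mxE block_mxEdl !mxE.
have hcolR : forall j, col (rshift 1 j) (iR P) =
    col_mx (((- m 0 j)%:~R : R)%:M : 'M[R]_1) (col j (iR g2)).
  move=> j; apply/matrixP => r c; rewrite (ord1 c) -(@fintype.splitK 1 k r); case: (fintype.split r) => r' /=.
    by rewrite (ord1 r') col_mxEu [LHS]mxE [LHS]mxE block_mxEur !mxE.
  by rewrite col_mxEd [LHS]mxE [LHS]mxE block_mxEdr !mxE.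
have hQS0 : Q S 0 = 0 by rewrite /Q mulmx0 mxE.
have hL : Q G1 (col (lshift k 0) (iR P)) = a.
  by rewrite hcolL hQ mulmx0 mxE mulr0 addr0 expr1n mulr1 hQS0 addr0.
have hR : forall j, Q G1 (col (rshift 1 j) (iR P)) <= a / 4 + C2.
  move=> j; rewrite hcolR hQ.
  have -> : a^-1 * (b *m col j (iR g2)) 0 0 = f 0 j.
    by rewrite colE mulmxA -colE !mxE.
  have hq : Q S (col j (iR g2)) <= C2 by rewrite -Q_diag; exact: hg2.
  have hf := round_le (f 0 j).
  rewrite [m 0 j]mxE intrN.
  move: hf; set mm := (Num.floor _)%:~R => hf.
  have e : (- mm + f 0 j) ^+ 2 = (f 0 j - mm) ^+ 2 by rewrite addrC.
  have := ler_wpM2l (ltW a_pos) hf; rewrite -e => h4.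
  lra.
have ha : a <= Vp + 2 * C2.
  have [hk|hk] := posnP k.
    by rewrite (det00 S hk) mulr1 in hdetS; lra.
  pose j0 : 'I_k := Ordinal hk.
  have := hmin _ (unit_col_neq0 (rshift 1 j0) ugam).
  rewrite map_col -Q_diag hdiag -/a => h.
  have := hR j0; lra.
exists gam; split => //.
suff hh : forall i : 'I_(1 + k), ((iR gam)^T *m G *m iR gam) i i <= Vp + 3 * C2 by [].
move=> i; rewrite hdiag -(@fintype.splitK 1 k i).
case: (fintype.split i) => [i0|j] /=.
  by rewrite (ord1 i0) hL; lra.
by have := hR j; lra.
Qed.
End Red3.
Arguments reduce {R}.
Section Fin1.
Variable R : realType.
Local Notation iR := (map_mx (intr : int -> R)).

Lemma sqr_normr (x : R) : `|x| ^+ 2 = x ^+ 2.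
Proof. exact: real_normK (num_real x). Qed.

Lemma Q_gram n m (M : 'M[R]_(m, n)) x :
  Q (M^T *m M) x = \sum_i ((M *m x) i 0) ^+ 2.
Proof.
rewrite /Q (mulmxA x^T) -trmx_mul -mulmxA.
by rewrite mxE; apply: eq_bigr => i _; rewrite mxE expr2.
Qed.

Lemma sq_le_sum n (y : 'cV[R]_n) i : (y i 0) ^+ 2 <= \sum_j (y j 0) ^+ 2.
Proof.
rewrite (bigD1 i) //= lerDl; apply: sumr_ge0 => j _; exact: sqr_ge0.
Qed.

Lemma lat_lb d (g : 'M[R]_d) : g \in unitmx ->
  exists2 e1 : R, 0 < e1 & forall u : 'cV[int]_d, u != 0 ->
    e1 <= \sum_i ((g *m iR u) i 0) ^+ 2.
Proof.
move=> ug.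
pose A := invmx g.
pose N := \sum_i \sum_j (A i j) ^+ 2 + 1.
have hN1 : 1 <= N.
  rewrite lerDr; apply: sumr_ge0 => i _; apply: sumr_ge0 => j _; exact: sqr_ge0.
have hN0 : 0 < N by lra.
exists (1 / N); first by apply: divr_gt0.
move=> u nu.
have [i hi] : exists i, u i 0 != 0.
  apply/existsP; apply: contraNT nu; rewrite negb_exists => /forallP h.
  apply/eqP/matrixP => r c; rewrite (ord1 c) mxE; exact/eqP/negbNE/h.
pose y := g *m iR u.
pose s := \sum_j (y j 0) ^+ 2.
have hy : iR u = A *m y by rewrite /y mulmxA mulVmx // mul1mx.
have hu1 : 1 <= ((u i 0)%:~R : R) ^+ 2.
  have : 1 <= u i 0 * u i 0 by move: hi; nia.
  by rewrite -(ler_int R) intrM -expr2.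
have hA : \sum_j (A i j) ^+ 2 <= N.
  apply: (@le_trans _ _ (\sum_i \sum_j (A i j) ^+ 2)); last by rewrite /N lerDl.
  rewrite [X in _ <= X](bigD1 i) //= lerDl; apply: sumr_ge0 => l _; apply: sumr_ge0 => j _; exact: sqr_ge0.
have hb : `|(iR u) i 0| <= 1 / (2 * N) * \sum_j (A i j) ^+ 2 + N / 2 * s.
  rewrite hy mxE.
  apply: (le_trans (ler_norm_sum _ _ _)).
  rewrite /s !mulr_sumr -big_split /=; apply: ler_sum => j _.
  rewrite normrM.
  have : 0 <= (`|A i j| - N * `|y j 0|) ^+ 2 by exact: sqr_ge0.
  rewrite -[(A i j) ^+ 2]sqr_normr -[(y j 0) ^+ 2]sqr_normr.
  move: (normr_ge0 (A i j)) (normr_ge0 (y j 0)) => ha hyy.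
  move: (`|A i j|) (`|y j 0|) ha hyy => p q hp hq h.
  rewrite -subr_ge0.
  have -> : 1 / (2 * N) * p ^+ 2 + N / 2 * q ^+ 2 - p * q = (p - N * q) ^+ 2 / (2 * N).
    by field; lra.
  by apply: divr_ge0 => //; lra.
have hu2 : 1 <= `|(iR u) i 0|.
  rewrite mxE; move: hu1; rewrite -sqr_normr.
  have := normr_ge0 ((u i 0)%:~R : R); set w := `|_|; nra.
have hs0 : 0 <= s by apply: sumr_ge0 => j _; exact: sqr_ge0.
have h5 : 1 / (2 * N) * \sum_j (A i j) ^+ 2 <= 1 / 2.
  apply: (le_trans (ler_wpM2l _ hA)); first by apply: divr_ge0 => //; lra.
  by rewrite (_ : 1 / (2 * N) * N = 1 / 2) //; field; lra.
rewrite ler_pdivrMr //.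
have : 1 <= 1/2 + N / 2 * s by lra.
move=> h6; rewrite -/s; nra.
Qed.
End Fin1.
Arguments lat_lb {R d g}. Arguments Q_gram {R n m}. Arguments sq_le_sum {R n}.
Section Fin2.
Variable R : realType.
Local Notation iR := (map_mx (intr : int -> R)).

Lemma prod_le_s N (x : 'I_N -> R) (s : R) : (0 < N)%N ->
  (forall i, 0 <= x i <= s) -> s <= 1 -> \prod_i x i <= s.
Proof.
move=> hN hx hs.
have s0 : 0 <= s by case: N hN x hx => // N _ x hx; have /andP [h1 h2] := hx ord0; exact: le_trans h2.
apply: (@le_trans _ _ (\prod_(i < N) s)); first by apply: ler_prod => i _; exact: hx.
rewrite prodr_const card_ord; case: N hN {x hx} => // N _.
by rewrite exprS -[leRHS]mulr1 ler_wpM2l // exprn_ile1.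
Qed.

Lemma orbit_lb d (g : 'M[R]_d) (v : 'cV[R]_d) (t : 'rV[R]_(d + 1))
  (ht0 : \sum_i t 0 i = 0) (htp : forall i : 'I_(d + 1), (i < d)%N -> 0 < t 0 i)
  (del e1 : R) : 0 < del ->
  (forall u : 'cV[int]_d, u != 0 -> e1 <= \sum_i ((g *m iR u) i 0) ^+ 2) ->
  (forall (n : int) (u : 'cV[int]_d), n != 0 ->
      del <= `|(n%:~R : R)| * `|Nw (g *m iR u + n%:~R *: v)|) ->
  forall z : 'cV[int]_(d + 1), z != 0 ->
  Num.min 1 (Num.min (del ^+ 2) e1) <=
    Q ((diag_mx (map_mx expR t) *m tau g v)^T *m (diag_mx (map_mx expR t) *m tau g v)) (iR z).
Proof.
move=> del0 he1 hkey z nz.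
rewrite Q_gram.
rewrite -[z]vsubmxK.
set u := usubmx z; set n := dsubmx z.
set nn := n 0 0.
have hn : iR n = (nn%:~R : R)%:M by rewrite [LHS]mx11_scalar mxE.
pose w := g *m iR u + nn%:~R *: v.
have hMz : diag_mx (map_mx expR t) *m tau g v *m iR (col_mx u n) =
    \matrix_(i, j) (expR (t 0 i) * col_mx w (iR n) i j).
  rewrite -mulmxA map_col_mx /tau mul_block_col mul0mx add0r mul1mx hn mul_mx_scalar.
  by rewrite mul_diag_mx; apply/matrixP => i j; rewrite !mxE.
rewrite hMz.
set y := \matrix_(i, j) _.
set s := \sum_i _.
have hyL : forall i : 'I_d, y (lshift 1 i) 0 = expR (t 0 (lshift 1 i)) * w i 0.
  by move=> i; rewrite mxE col_mxEu.
have hyR : y (rshift d 0) 0 = expR (t 0 (rshift d 0)) * nn%:~R.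
  by rewrite mxE col_mxEd mxE.
have hs0 : 0 <= s by apply: sumr_ge0 => i _; exact: sqr_ge0.
have hmin1 : Num.min 1 (Num.min (del ^+ 2) e1) <= 1 by rewrite ge_min lexx.
have hmin2 : Num.min 1 (Num.min (del ^+ 2) e1) <= del ^+ 2 by rewrite !ge_min lexx orbT.
have hmin3 : Num.min 1 (Num.min (del ^+ 2) e1) <= e1 by rewrite !ge_min lexx !orbT.
have [nn0|nn0] := eqVneq nn 0.
  have u0 : u != 0.
    apply: contraNneq nz => u0; rewrite -[z]vsubmxK -/u -/n u0.
    have -> : n = 0 by apply/matrixP => i j; rewrite (ord1 i) (ord1 j) [RHS]mxE; exact: nn0.
    by rewrite col_mx0.
  apply: (le_trans hmin3); apply: (le_trans (he1 u u0)).
  rewrite /s big_split_ord /= -[X in X <= _]addr0; apply: lerD; last first.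
    by apply: sumr_ge0 => i _; exact: sqr_ge0.
  apply: ler_sum => i _; rewrite hyL /w nn0 scale0r addr0.
  have : 1 <= expR (t 0 (lshift 1 i)).
    apply: le_trans (expR_ge1Dx _); rewrite lerDl; apply: ltW; apply: htp.
    by rewrite /= ltn_ord.
  move: (expR _) (_ i 0) => e x he; rewrite exprMn.
  have h1 : 1 <= e ^+ 2 by nra.
  have h2 := sqr_ge0 x; nra.
have [s1|s1] := lerP 1 s; first exact: le_trans hmin1 s1.
apply: (le_trans hmin2).
have hp : \prod_i (y i 0) ^+ 2 <= s.
  apply: prod_le_s; first by rewrite addn1.
    by move=> i; rewrite sqr_ge0 /=; exact: sq_le_sum.
  exact: ltW.
have hpe : \prod_i (y i 0) ^+ 2 = (Nw w * nn%:~R) ^+ 2.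
  rewrite prodrXl; congr (_ ^+ 2).
  have -> : \prod_i y i 0 = \prod_i (expR (t 0 i) * col_mx w (iR n) i 0).
    by apply: eq_bigr => i _; rewrite mxE.
  rewrite big_split /= -expR_sum ht0 expR0 mul1r big_split_ord big_ord1 /Nw.
  congr (_ * _); first by apply: eq_bigr => i _; rewrite col_mxEu.
  by rewrite col_mxEd mxE.
have := hkey nn u nn0; rewrite -/w => hk.
have : del ^+ 2 <= (`|(nn%:~R : R)| * `|Nw w|) ^+ 2.
  by rewrite ler_pXn2r // ?nnegrE ?mulr_ge0 //; exact: ltW.
rewrite -normrM sqr_normr mulrC -hpe => h.
exact: le_trans h hp.
Qed.
End Fin2.
Arguments orbit_lb {R d g v t}. Arguments compact_box {R n}.

Import Order.TTheory GRing.Theory Num.Theory.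
Local Open Scope classical_set_scope.
Local Open Scope ring_scope.
Theorem lemma2p2 (R : realType) (d : nat) (hd : (2 <= d)%N)
  (g : 'M[R]_d) (v : 'cV[R]_d) (hg : \det g = 1) :
  ~ bounded_in_X (Aplus_orbit g v) -> is_L g v.
Proof.
move=> nb; apply: contrapT => nL; apply: nb.
set E := [set `|(n%:~R : R) * Ngrid g (n%:~R *: v)| | n in [set n : int | n != 0]].
have E1 : E !=set0.
  by exists (`|((1:int)%:~R : R) * Ngrid g ((1:int)%:~R *: v)|); exists 1.
have Elb : lbound E 0 by move=> _ [n _ <-].
have hinf0 : 0 <= inf E := lb_le_inf E1 Elb.
have hdel : 0 < inf E.
  rewrite lt_neqAle hinf0 andbT eq_sym; apply/eqP; exact: nL.
set del := inf E.
have hE : forall n : int, n != 0 -> del <= `|(n%:~R : R) * Ngrid g (n%:~R *: v)|.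
  by move=> n hn; apply: ge_inf; [exists 0 | exists n].
have hNg : forall (w0 : 'cV[R]_d) (u : 'cV[int]_d),
    0 <= Ngrid g w0 /\ Ngrid g w0 <= `|Nw (g *m map_mx intr u + w0)|.
  move=> w0 u.
  have F1 : [set `|Nw w| | w in grid g w0] (`|Nw (g *m map_mx intr u + w0)|).
    by exists (g *m map_mx intr u + w0) => //; exists u.
  split.
    by apply: lb_le_inf; [eexists; exact: F1 | move=> _ [w _ <-]].
  by apply: ge_inf => //; exists 0 => _ [w _ <-].
have key : forall (n : int) (u : 'cV[int]_d), n != 0 ->
    del <= `|(n%:~R : R)| * `|Nw (g *m map_mx intr u + n%:~R *: v)|.
  move=> n u hn; have [h0 h1] := hNg (n%:~R *: v) u.
  apply: (le_trans (hE n hn)); rewrite normrM (ger0_norm h0).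
  by apply: ler_wpM2l.
have ug : g \in unitmx by rewrite unitmxE hg unitr1.
have [e1 e1p he1] := lat_lb ug.
pose eps := Num.min 1 (Num.min (del ^+ 2) e1).
have eps0 : 0 < eps by rewrite !lt_min ltr01 exprn_gt0.
have [C [C0 hC]] := reduce (d + 1) eps 1 eps0.
exists [set A : 'M[R]_(d + 1) | \det A = 1 /\ forall i j, `|A i j| <= C + 1].
split; first exact: compact_box.
split; first by move=> A [].
move=> _ [a [t [ht0 [htp ->]]] <-].
set M := diag_mx (map_mx expR t) *m tau g v.
have hdetM : \det M = 1.
  rewrite /M det_mulmx det_diag /tau det_ublock det1 hg mulr1.
  have -> : \prod_i (map_mx expR t) 0 i = \prod_i expR (t 0 i).
    by apply: eq_bigr => i _; rewrite mxE.
  by rewrite mulr1 -expR_sum ht0 expR0.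
set G := M^T *m M.
have hGs : G^T = G by rewrite /G trmx_mul trmxK.
have hdG : \det G <= 1 by rewrite /G det_mulmx det_tr hdetM mulr1.
have hGz : forall z : 'cV[int]_(d + 1), z != 0 -> eps <= Q G (map_mx intr z).
  move=> z nz; exact: (orbit_lb ht0 htp del e1 hdel he1 key z nz).
have [gam [ugam hgam]] := hC G hGs hGz hdG.
pose dg := \det gam.
have dg2 : dg * dg = 1 by apply: int_unit_sq; rewrite -unitmxE.
pose i0 : 'I_(d + 1) := rshift d ord0.
pose F : 'M[int]_(d + 1) := diag_mx (\row_i (if i == i0 then dg else 1)).
pose gam' := gam *m F.
have hdet' : \det gam' = 1.
  rewrite /gam' det_mulmx det_diag (bigD1 i0) //= big1 ?mulr1.
    by rewrite mxE eqxx.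
  by move=> i /negbTE hi; rewrite mxE hi.
pose h := M *m map_mx intr gam'.
exists h; last by exists gam'.
split.
  by rewrite /h det_mulmx hdetM mul1r det_map_mx hdet'.
have hdiag : forall j, (h^T *m h) j j <= C.
  move=> j.
  have -> : h^T *m h = (map_mx intr F)^T *m ((map_mx intr gam)^T *m G *m map_mx intr gam) *m map_mx intr F.
    by rewrite /h /gam' map_mxM /G !trmx_mul !mulmxA.
  have hX := hgam j; move: hX; set X := (_^T *m G *m _) => hX; clearbody X.
  rewrite map_diag_mx tr_diag_mx mul_diag_mx mul_mx_diag !mxE.
  case: (j == i0) => /=; last by rewrite rmorph1 mulr1 mul1r.
  by rewrite mulrC mulrA -intrM dg2 mul1r.
move=> i j.
have hsq : (h i j) ^+ 2 <= C.
  apply: le_trans (hdiag j).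
  have -> : (h^T *m h) j j = \sum_l ((col j h) l 0) ^+ 2.
    by rewrite mxE; apply: eq_bigr => l _; rewrite !mxE expr2.
  by have := sq_le_sum (col j h) i; rewrite mxE.
rewrite leNgt; apply/negP => hlt.
have := normr_ge0 (h i j); rewrite -sqr_normr in hsq; set x := `|h i j| in hsq hlt *.
nra.
Qed.
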